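(* Let $\omega:\mathbb N\to[1,\infty)$ be an unbounded weight on $\mathbb N_{\min}$. Then $(\ell^1_\omega(\mathbb N_{\min}),\mathbf T_2)$ is not an AMNM pair.
   Context: $\mathbb N_{\min}$ is the semilattice $\mathbb N$ with product $(m,n)\mapsto\min(m,n)$; every function $\omega:\mathbb N\to[1,\infty)$ is a submultiplicative weight on it. $\ell^1_\omega(\mathbb N_{\min})$ is the Banach space of $a:\mathbb N\to\mathbb C$ with $\|a\|=\sum_n|a(n)|\omega(n)<\infty$, with convolution product $\delta_m*\delta_n=\delta_{\min(m,n)}$. $\mathbf T_2=\{\begin{pmatrix}a&b\\0&a\end{pmatrix}:a,b\in\mathbb C\}$ with norm $|a|+|b|$. For a bounded linear map $T:A\to B$ between Banach algebras, $\operatorname{def}(T)=\sup\{\|T(xy)-T(x)T(y)\|:\|x\|,\|y\|\le1\}$ and $\operatorname{Mult}(A,B)$ is the set of bounded multiplicative linear maps $A\to B$ (including $0$). $(A,B)$ is an AMNM pair if for every $K>0$ and $\varepsilon>0$ there exists $\delta>0$ such that every bounded linear $T:A\to B$ with $\|T\|\le K$ and $\operatorname{def}(T)\le\delta$ satisfies $\operatorname{dist}(T,\operatorname{Mult}(A,B))\le\varepsilon$ in operator norm. *)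

(* Defs.v *)
From Stdlib Require Import Reals Lra ClassicalEpsilon.
Open Scope R_scope.

Definition C := (R * R)%type.
Definition C0 : C := (0, 0).
Definition Cadd (z w : C) : C := (fst z + fst w, snd z + snd w).
Definition Copp (z : C) : C := (- fst z, - snd z).
Definition Csub (z w : C) : C := Cadd z (Copp w).
Definition Cmul (z w : C) : C :=
  (fst z * fst w - snd z * snd w, fst z * snd w + snd z * fst w).
Definition Cnorm (z : C) : R := sqrt (fst z ^ 2 + snd z ^ 2).

(* The value of a convergent real series (arbitrary if it diverges). *)
Definition Rsum (u : nat -> R) : R :=
  epsilon (inhabits 0) (fun l => infinite_sum u l).
Definition Csum (f : nat -> C) : C :=
  (Rsum (fun n => fst (f n)), Rsum (fun n => snd (f n))).

Definition seqC := nat -> C.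

Definition in_l1 (omega : nat -> R) (x : seqC) : Prop :=
  exists l, infinite_sum (fun n => Cnorm (x n) * omega n) l.

Definition l1norm (omega : nat -> R) (x : seqC) : R :=
  Rsum (fun n => Cnorm (x n) * omega n).

Definition l1add (x y : seqC) : seqC := fun n => Cadd (x n) (y n).
Definition l1scal (c : C) (x : seqC) : seqC := fun n => Cmul c (x n).

(* Convolution with delta_m * delta_n = delta_(min m n):
   (x*y)(k) = sum_m sum_n [min m n = k] x(m) y(n). *)
Definition l1mul (x y : seqC) : seqC := fun k =>
  Csum (fun m => Csum (fun n =>
    if Nat.eqb (Nat.min m n) k then Cmul (x m) (y n) else C0)).

(* (a, b) represents the matrix [[a, b], [0, a]]. *)
Definition T2 := (C * C)%type.
Definition T2add (s t : T2) : T2 := (Cadd (fst s) (fst t), Cadd (snd s) (snd t)).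
Definition T2sub (s t : T2) : T2 := (Csub (fst s) (fst t), Csub (snd s) (snd t)).
Definition T2scal (c : C) (s : T2) : T2 := (Cmul c (fst s), Cmul c (snd s)).
Definition T2mul (s t : T2) : T2 :=
  (Cmul (fst s) (fst t), Cadd (Cmul (fst s) (snd t)) (Cmul (snd s) (fst t))).
Definition T2norm (s : T2) : R := Cnorm (fst s) + Cnorm (snd s).

(* Only the values on l^1_omega matter. *)
Definition is_linear (omega : nat -> R) (T : seqC -> T2) : Prop :=
  (forall x y, in_l1 omega x -> in_l1 omega y ->
     T (l1add x y) = T2add (T x) (T y)) /\
  (forall c x, in_l1 omega x -> T (l1scal c x) = T2scal c (T x)).

Definition opnorm_le (omega : nat -> R) (T : seqC -> T2) (K : R) : Prop :=
  forall x, in_l1 omega x -> T2norm (T x) <= K * l1norm omega x.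

Definition is_bounded (omega : nat -> R) (T : seqC -> T2) : Prop :=
  exists K, opnorm_le omega T K.

Definition defect_le (omega : nat -> R) (T : seqC -> T2) (d : R) : Prop :=
  forall x y, in_l1 omega x -> in_l1 omega y ->
    l1norm omega x <= 1 -> l1norm omega y <= 1 ->
    T2norm (T2sub (T (l1mul x y)) (T2mul (T x) (T y))) <= d.

Definition is_mult (omega : nat -> R) (phi : seqC -> T2) : Prop :=
  is_linear omega phi /\ is_bounded omega phi /\
  (forall x y, in_l1 omega x -> in_l1 omega y ->
     phi (l1mul x y) = T2mul (phi x) (phi y)).

Definition dist_mult_le (omega : nat -> R) (T : seqC -> T2) (eps : R) : Prop :=
  forall eta, eta > 0 -> exists phi, is_mult omega phi /\
    opnorm_le omega (fun x => T2sub (T x) (phi x)) (eps + eta).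

Definition AMNM_pair (omega : nat -> R) : Prop :=
  forall K eps, K > 0 -> eps > 0 ->
    exists delta, delta > 0 /\
      forall T : seqC -> T2,
        is_linear omega T -> opnorm_le omega T K -> defect_le omega T delta ->
        dist_mult_le omega T eps.

(* Main.v *)
Require Import Defs.
From Stdlib Require Import Reals Lra Lia ClassicalEpsilon FunctionalExtensionality.
Open Scope R_scope.

Lemma Rsum_eq u l : infinite_sum u l -> Rsum u = l.
Proof.
  intro H. unfold Rsum.
  pose proof (epsilon_spec (inhabits 0) (fun l => infinite_sum u l) (ex_intro _ l H)) as H2.
  exact (uniqueness_sum _ _ _ H2 H).
Qed.

Lemma is_ext u v a : (forall n, u n = v n) -> infinite_sum v a -> infinite_sum u a.
Proof.
  intros E H eps He. destruct (H eps He) as [N HN]. exists N. intros n Hn.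
  rewrite (sum_eq u v n) by (intros; apply E). auto.
Qed.

Lemma is_eqv u a b : a = b -> infinite_sum u a -> infinite_sum u b.
Proof. intros ->; auto. Qed.

Lemma is_plus u v a b : infinite_sum u a -> infinite_sum v b ->
  infinite_sum (fun n => u n + v n) (a + b).
Proof.
  intros Hu Hv. unfold infinite_sum.
  assert (H := CV_plus _ _ _ _ Hu Hv). intros eps He. destruct (H eps He) as [N HN].
  exists N. intros n Hn. rewrite sum_plus. apply HN; auto.
Qed.

Lemma is_scal u a c : infinite_sum u a -> infinite_sum (fun n => c * u n) (c * a).
Proof.
  intros Hu. assert (Hc : Un_cv (fun _ => c) c).
  { intros e He. exists 0%nat. intros. unfold Rdist. rewrite Rminus_diag, Rabs_R0. auto. }
  assert (H := CV_mult (fun _ => c) _ c a Hc Hu).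
  intros eps He. destruct (H eps He) as [N HN].
  exists N. intros n Hn.
  replace (sum_f_R0 (fun n0 => c * u n0) n) with (c * sum_f_R0 u n).
  - apply HN; auto.
  - clear Hn. induction n; simpl; [ring|]. rewrite <- IHn. ring.
Qed.

Lemma is_zero : infinite_sum (fun _ => 0) 0.
Proof.
  intros eps He. exists 0%nat. intros n _.
  assert (sum_f_R0 (fun _ => 0) n = 0).
  { induction n; simpl; auto. rewrite IHn; ring. }
  rewrite H. unfold Rdist. rewrite Rminus_0_r, Rabs_R0. auto.
Qed.

Ltac dnat := repeat match goal with
  | |- context [Nat.eqb ?a ?b] => destruct (Nat.eqb_spec a b)
  | |- context [Nat.leb ?a ?b] => destruct (Nat.leb_spec a b)
  end.

Lemma sum_single k c n : (k <= n)%nat ->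
  sum_f_R0 (fun m => if Nat.eqb m k then c else 0) n = c.
Proof.
  induction n; intros Hk.
  - cbn [sum_f_R0]. replace k with 0%nat by lia. reflexivity.
  - destruct (Nat.eq_dec k (S n)).
    + subst. cbn [sum_f_R0]. rewrite Nat.eqb_refl.
      assert (forall m, (m <= n)%nat -> sum_f_R0 (fun m0 => if Nat.eqb m0 (S n) then c else 0) m = 0).
      { induction m; intros; cbn [sum_f_R0].
        - reflexivity.
        - rewrite IHm by lia. dnat; try lia; ring. }
      rewrite H by lia. ring.
    + cbn [sum_f_R0]. rewrite IHn by lia. dnat; try lia; ring.
Qed.

Lemma is_single k c : infinite_sum (fun m => if Nat.eqb m k then c else 0) c.
Proof.
  intros eps He. exists k. intros n Hn. rewrite sum_single by lia.
  unfold Rdist. rewrite Rminus_diag, Rabs_R0. auto.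
Qed.

Fixpoint psum (u : nat -> R) (M : nat) : R :=
  match M with 0%nat => 0 | S m => psum u m + u m end.

Lemma sum_psum u n : sum_f_R0 u n = psum u (S n).
Proof. induction n; simpl in *; [ring|rewrite IHn; ring]. Qed.

Definition mask (M : nat) (u : nat -> R) : nat -> R :=
  fun n => if Nat.leb M n then u n else 0.

Lemma sum_mask M u n : sum_f_R0 (mask M u) n = psum u (S n) - psum u (Nat.min M (S n)).
Proof.
  induction n.
  - unfold mask. destruct M; [simpl; ring|]. rewrite Nat.min_r by lia. simpl; ring.
  - change (sum_f_R0 (mask M u) (S n)) with (sum_f_R0 (mask M u) n + mask M u (S n)).
    rewrite IHn. unfold mask. destruct (Nat.leb_spec M (S n)).
    + rewrite !Nat.min_l by lia. simpl. ring.
    + rewrite !Nat.min_r by lia. simpl. ring.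
Qed.

Lemma is_mask M u l : infinite_sum u l -> infinite_sum (mask M u) (l - psum u M).
Proof.
  intros H eps He. destruct (H eps He) as [N HN]. exists (N + M)%nat. intros n Hn.
  rewrite sum_mask, Nat.min_l by lia. rewrite <- sum_psum.
  unfold Rdist. replace (sum_f_R0 u n - psum u M - (l - psum u M)) with (sum_f_R0 u n - l) by ring.
  apply HN. lia.
Qed.

Definition summ (u : nat -> R) := exists l, infinite_sum u l.
Definition tl (u : nat -> R) (M : nat) : R := Rsum (mask M u).

Lemma tl_eq u l M : infinite_sum u l -> tl u M = l - psum u M.
Proof. intros H. apply Rsum_eq, is_mask, H. Qed.

Lemma is_tl u M : summ u -> infinite_sum (mask M u) (tl u M).
Proof. intros [l H]. rewrite (tl_eq _ _ _ H). apply is_mask, H. Qed.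

Lemma psum_cv u l : infinite_sum u l -> Un_cv (fun k => l - psum u k) 0.
Proof.
  intros H eps He. destruct (H eps He) as [N HN]. exists (S N). intros n Hn.
  destruct n as [|n]; [lia|]. rewrite <- sum_psum. unfold Rdist in *.
  rewrite Rminus_0_r, Rabs_minus_sym. apply HN. lia.
Qed.

Lemma psum_tele (P : nat -> R) M : psum (fun k => P k - P (S k)) M = P 0%nat - P M.
Proof. induction M; simpl; [ring|rewrite IHM; ring]. Qed.

Lemma is_tele (P : nat -> R) : Un_cv P 0 -> infinite_sum (fun k => P k - P (S k)) (P 0%nat).
Proof.
  intros H eps He. destruct (H eps He) as [N HN]. exists N. intros n Hn.
  rewrite sum_psum, psum_tele. unfold Rdist in *.
  replace (P 0%nat - P (S n) - P 0%nat) with (- (P (S n) - 0)) by ring.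
  rewrite Rabs_Ropp. apply HN. lia.
Qed.

Lemma prodtail a b M : summ a -> summ b ->
  infinite_sum (mask M (fun k => a k * tl b k + tl a (S k) * b k)) (tl a M * tl b M).
Proof.
  intros [la Ha] [lb Hb].
  set (P := fun k => tl a k * tl b k).
  assert (HP : Un_cv P 0).
  { replace 0 with (0 * 0) by ring. unfold P.
    apply (Un_cv_ext (fun k => (la - psum a k) * (lb - psum b k))).
    - intros k. rewrite (tl_eq _ _ _ Ha), (tl_eq _ _ _ Hb). reflexivity.
    - apply CV_mult; apply psum_cv; auto. }
  apply is_ext with (v := mask M (fun k => P k - P (S k))).
  - intros n. unfold mask, P. destruct (Nat.leb M n); auto.
    rewrite !(tl_eq _ _ _ Ha), !(tl_eq _ _ _ Hb). simpl. ring.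
  - apply (is_eqv _ (P 0%nat - psum (fun k => P k - P (S k)) M)).
    + rewrite psum_tele. unfold P. ring.
    + apply is_mask, is_tele, HP.
Qed.

Definition re (z : seqC) : nat -> R := fun n => fst (z n).
Definition im (z : seqC) : nat -> R := fun n => snd (z n).

Lemma Rsum_ext u v : (forall n, u n = v n) -> Rsum u = Rsum v.
Proof. intros H. f_equal. extensionality n. auto. Qed.

Lemma Cmul_fst a b : fst (Cmul a b) = fst a * fst b - snd a * snd b.
Proof. reflexivity. Qed.
Lemma Cmul_snd a b : snd (Cmul a b) = fst a * snd b + snd a * fst b.
Proof. reflexivity. Qed.

Lemma l1mul_fst x y k : summ (re x) -> summ (im x) -> summ (re y) -> summ (im y) ->
  fst (l1mul x y k) =
   fst (x k) * tl (re y) k - snd (x k) * tl (im y) k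
   + tl (re x) (S k) * fst (y k) - tl (im x) (S k) * snd (y k).
Proof.
  intros Hx1 Hx2 Hy1 Hy2. unfold l1mul, Csum. cbn [fst].
  apply Rsum_eq.
  apply is_ext with (v := fun m => (if Nat.eqb m k then fst (x k) * tl (re y) k - snd (x k) * tl (im y) k else 0)
     + (fst (y k) * mask (S k) (re x) m + (- snd (y k)) * mask (S k) (im x) m)).
  - intros m. apply Rsum_eq.
    destruct (Nat.lt_trichotomy m k) as [Hlt|[Heq|Hgt]].
    + apply is_ext with (v := fun _ => 0); [|apply is_eqv with (a := 0); [|apply is_zero]].
      * intros n. dnat; try lia. reflexivity.
      * unfold mask. dnat; try lia. ring.
    + subst m. apply is_ext with (v := fun n => fst (x k) * mask k (re y) n + (- snd (x k)) * mask k (im y) n).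
      * intros n. unfold mask, re, im. dnat; try lia; unfold C0; simpl; ring.
      * apply is_eqv with (a := fst (x k) * tl (re y) k + (- snd (x k)) * tl (im y) k).
        { unfold mask. dnat; try lia. ring. }
        apply is_plus; apply is_scal; apply is_tl; auto.
    + apply is_ext with (v := fun n => if Nat.eqb n k then fst (x m) * fst (y k) - snd (x m) * snd (y k) else 0).
      * intros n. dnat; try lia; subst; try reflexivity. rewrite Nat.min_r by lia. reflexivity.
      * apply is_eqv with (a := fst (x m) * fst (y k) - snd (x m) * snd (y k)); [|apply is_single].
        unfold mask, re, im. dnat; try lia. ring.
  - apply is_eqv with (a := (fst (x k) * tl (re y) k - snd (x k) * tl (im y) k) +
        (fst (y k) * tl (re x) (S k) + (- snd (y k)) * tl (im x) (S k))); [ring|].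
    apply is_plus; [apply is_single|]. apply is_plus; apply is_scal; apply is_tl; auto.
Qed.

Lemma l1mul_snd x y k : summ (re x) -> summ (im x) -> summ (re y) -> summ (im y) ->
  snd (l1mul x y k) =
   fst (x k) * tl (im y) k + snd (x k) * tl (re y) k
   + tl (re x) (S k) * snd (y k) + tl (im x) (S k) * fst (y k).
Proof.
  intros Hx1 Hx2 Hy1 Hy2. unfold l1mul, Csum. cbn [snd].
  apply Rsum_eq.
  apply is_ext with (v := fun m => (if Nat.eqb m k then fst (x k) * tl (im y) k + snd (x k) * tl (re y) k else 0)
     + (snd (y k) * mask (S k) (re x) m + fst (y k) * mask (S k) (im x) m)).
  - intros m. apply Rsum_eq.
    destruct (Nat.lt_trichotomy m k) as [Hlt|[Heq|Hgt]].
    + apply is_ext with (v := fun _ => 0); [|apply is_eqv with (a := 0); [|apply is_zero]].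
      * intros n. dnat; try lia. reflexivity.
      * unfold mask. dnat; try lia. ring.
    + subst m. apply is_ext with (v := fun n => fst (x k) * mask k (im y) n + snd (x k) * mask k (re y) n).
      * intros n. unfold mask, re, im. dnat; try lia; unfold C0; simpl; ring.
      * apply is_eqv with (a := fst (x k) * tl (im y) k + snd (x k) * tl (re y) k).
        { unfold mask. dnat; try lia. ring. }
        apply is_plus; apply is_scal; apply is_tl; auto.
    + apply is_ext with (v := fun n => if Nat.eqb n k then fst (x m) * snd (y k) + snd (x m) * fst (y k) else 0).
      * intros n. dnat; try lia; subst; try reflexivity. rewrite Nat.min_r by lia. reflexivity.
      * apply is_eqv with (a := fst (x m) * snd (y k) + snd (x m) * fst (y k)); [|apply is_single].
        unfold mask, re, im. dnat; try lia. ring.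
  - apply is_eqv with (a := (fst (x k) * tl (im y) k + snd (x k) * tl (re y) k) +
        (snd (y k) * tl (re x) (S k) + fst (y k) * tl (im x) (S k))); [ring|].
    apply is_plus; [apply is_single|]. apply is_plus; apply is_scal; apply is_tl; auto.
Qed.

Lemma tl_S u k : summ u -> tl u k = u k + tl u (S k).
Proof. intros [l H]. rewrite !(tl_eq _ _ _ H). simpl. ring. Qed.

Lemma tl_ext u v M : (forall n, u n = v n) -> tl u M = tl v M.
Proof. intros H. unfold tl. apply Rsum_ext. intros n. unfold mask. rewrite H. auto. Qed.

Lemma chi_mul_fst x y M : summ (re x) -> summ (im x) -> summ (re y) -> summ (im y) ->
  tl (fun k => fst (l1mul x y k)) M = tl (re x) M * tl (re y) M - tl (im x) M * tl (im y) M.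
Proof.
  intros Hx1 Hx2 Hy1 Hy2.
  rewrite (tl_ext _ (fun k => (fst (x k) * tl (re y) k + tl (re x) (S k) * fst (y k))
     + (-1) * (snd (x k) * tl (im y) k + tl (im x) (S k) * snd (y k)))).
  2:{ intros n. rewrite l1mul_fst by auto. ring. }
  apply Rsum_eq. apply is_ext with (v := fun n => mask M (fun k => re x k * tl (re y) k + tl (re x) (S k) * re y k) n
     + (-1) * mask M (fun k => im x k * tl (im y) k + tl (im x) (S k) * im y k) n).
  { intros n. unfold mask, re, im. dnat; ring. }
  apply is_eqv with (a := tl (re x) M * tl (re y) M + (-1) * (tl (im x) M * tl (im y) M)); [ring|].
  apply is_plus; [|apply is_scal]; apply prodtail; auto.
Qed.

Lemma chi_mul_snd x y M : summ (re x) -> summ (im x) -> summ (re y) -> summ (im y) ->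
  tl (fun k => snd (l1mul x y k)) M = tl (re x) M * tl (im y) M + tl (im x) M * tl (re y) M.
Proof.
  intros Hx1 Hx2 Hy1 Hy2.
  rewrite (tl_ext _ (fun k => (fst (x k) * tl (im y) k + tl (re x) (S k) * snd (y k))
     + (snd (x k) * tl (re y) k + tl (im x) (S k) * fst (y k)))).
  2:{ intros n. rewrite l1mul_snd by auto. ring. }
  apply Rsum_eq. apply is_ext with (v := fun n => mask M (fun k => re x k * tl (im y) k + tl (re x) (S k) * im y k) n
     + mask M (fun k => im x k * tl (re y) k + tl (im x) (S k) * re y k) n).
  { intros n. unfold mask, re, im. dnat; ring. }
  apply is_plus; apply prodtail; auto.
Qed.

Lemma abs_summ u v l : (forall n, Rabs (u n) <= v n) -> infinite_sum v l -> summ u.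
Proof.
  intros Hb Hv.
  assert (H2v : infinite_sum (fun n => 2 * v n) (2 * l)) by (apply is_scal; auto).
  destruct (Rseries_CV_comp (fun n => u n + Rabs (u n)) (fun n => 2 * v n)) as [lp Hp].
  { intros n. split.
    - pose proof (Rle_abs (- u n)). rewrite Rabs_Ropp in H. lra.
    - pose proof (Rle_abs (u n)). pose proof (Hb n). lra. }
  { exists (2 * l). exact H2v. }
  destruct (Rseries_CV_comp (fun n => Rabs (u n)) v) as [la Ha].
  { intros n. split; [apply Rabs_pos|apply Hb]. }
  { exists l. exact Hv. }
  exists (lp + (-1) * la).
  apply is_ext with (v := fun n => (u n + Rabs (u n)) + (-1) * Rabs (u n)).
  { intros; ring. }
  apply is_plus; [exact Hp|]. apply is_scal. exact Ha.
Qed.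

Lemma Cnorm_pos z : 0 <= Cnorm z.
Proof. apply sqrt_pos. Qed.

Lemma Cnorm_fst z : Rabs (fst z) <= Cnorm z.
Proof.
  unfold Cnorm. rewrite <- sqrt_Rsqr_abs. apply sqrt_le_1_alt.
  unfold Rsqr. pose proof (pow2_ge_0 (snd z)). simpl. nra.
Qed.

Lemma Cnorm_snd z : Rabs (snd z) <= Cnorm z.
Proof.
  unfold Cnorm. rewrite <- sqrt_Rsqr_abs. apply sqrt_le_1_alt.
  unfold Rsqr. pose proof (pow2_ge_0 (fst z)). simpl. nra.
Qed.

Lemma Cnorm_le z : Cnorm z <= Rabs (fst z) + Rabs (snd z).
Proof.
  unfold Cnorm. rewrite <- (sqrt_pow2 (Rabs (fst z) + Rabs (snd z))).
  2:{ pose proof (Rabs_pos (fst z)); pose proof (Rabs_pos (snd z)); lra. }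
  apply sqrt_le_1_alt. rewrite <- (pow2_abs (fst z)), <- (pow2_abs (snd z)).
  pose proof (Rabs_pos (fst z)); pose proof (Rabs_pos (snd z)). nra.
Qed.

Lemma abs_sum_le w v lw lv : infinite_sum w lw -> infinite_sum v lv ->
  (forall n, Rabs (w n) <= v n) -> Rabs lw <= lv.
Proof.
  intros Hw Hv Hb. apply Rabs_le. split.
  - assert (Hn : infinite_sum (fun n => (-1) * w n) ((-1) * lw)) by (apply is_scal; auto).
    enough ((-1) * lw <= lv) by lra.
    apply Rle_cv_lim with (Un := fun n => sum_f_R0 (fun n => (-1) * w n) n) (Vn := fun n => sum_f_R0 v n); auto.
    intros n. apply sum_Rle. intros m _. pose proof (Rle_abs (- w m)). rewrite Rabs_Ropp in H.
    pose proof (Hb m). lra.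
  - apply Rle_cv_lim with (Un := fun n => sum_f_R0 w n) (Vn := fun n => sum_f_R0 v n); auto.
    intros n. apply sum_Rle. intros m _. pose proof (Rle_abs (w m)). pose proof (Hb m). lra.
Qed.

Section W.
Variable omega : nat -> R.
Hypothesis Hw : forall n, 1 <= omega n.

Lemma l1_bnd_fst x n : Rabs (fst (x n)) <= Cnorm (x n) * omega n.
Proof. pose proof (Cnorm_fst (x n)); pose proof (Hw n); pose proof (Cnorm_pos (x n)). nra. Qed.
Lemma l1_bnd_snd x n : Rabs (snd (x n)) <= Cnorm (x n) * omega n.
Proof. pose proof (Cnorm_snd (x n)); pose proof (Hw n); pose proof (Cnorm_pos (x n)). nra. Qed.

Lemma l1_re x : in_l1 omega x -> summ (re x).
Proof. intros [l H]. apply (abs_summ _ (fun n => Cnorm (x n) * omega n) l); auto. intros; apply l1_bnd_fst. Qed.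
Lemma l1_im x : in_l1 omega x -> summ (im x).
Proof. intros [l H]. apply (abs_summ _ (fun n => Cnorm (x n) * omega n) l); auto. intros; apply l1_bnd_snd. Qed.

Lemma l1norm_eq x : in_l1 omega x -> exists l, infinite_sum (fun n => Cnorm (x n) * omega n) l /\ l1norm omega x = l.
Proof. intros [l H]. exists l. split; auto. apply Rsum_eq; auto. Qed.

Lemma tl_re_bound x M : in_l1 omega x -> Rabs (tl (re x) M) <= l1norm omega x.
Proof.
  intros Hx. destruct (l1norm_eq x Hx) as [l [H ->]].
  apply (abs_sum_le (mask M (re x)) _ _ _ (is_tl _ _ (l1_re x Hx)) H).
  intros n. unfold mask, re. dnat.
  - apply l1_bnd_fst.
  - rewrite Rabs_R0. pose proof (Hw n); pose proof (Cnorm_pos (x n)). nra.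
Qed.
Lemma tl_im_bound x M : in_l1 omega x -> Rabs (tl (im x) M) <= l1norm omega x.
Proof.
  intros Hx. destruct (l1norm_eq x Hx) as [l [H ->]].
  apply (abs_sum_le (mask M (im x)) _ _ _ (is_tl _ _ (l1_im x Hx)) H).
  intros n. unfold mask, im. dnat.
  - apply l1_bnd_snd.
  - rewrite Rabs_R0. pose proof (Hw n); pose proof (Cnorm_pos (x n)). nra.
Qed.

Lemma term_bound x N : in_l1 omega x -> Cnorm (x N) * omega N <= l1norm omega x.
Proof.
  intros Hx. destruct (l1norm_eq x Hx) as [l [H ->]].
  assert (Hp : forall n, 0 <= Cnorm (x n) * omega n).
  { intros n. pose proof (Hw n); pose proof (Cnorm_pos (x n)). nra. }
  apply Rle_trans with (sum_f_R0 (fun n => Cnorm (x n) * omega n) N).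
  - destruct N; simpl; [lra|]. pose proof (cond_pos_sum _ N Hp). lra.
  - apply sum_incr; auto.
Qed.
End W.

Lemma tl_lin u v a b M : summ u -> summ v ->
  tl (fun n => a * u n + b * v n) M = a * tl u M + b * tl v M.
Proof.
  intros Hu Hv. apply Rsum_eq. apply is_ext with (v := fun n => a * mask M u n + b * mask M v n).
  { intros n. unfold mask. dnat; ring. }
  apply is_plus; apply is_scal; apply is_tl; auto.
Qed.

Definition Tm (omega : nat -> R) (N : nat) (z : seqC) : T2 :=
  ((tl (re z) (S N), tl (im z) (S N)), (omega N * fst (z N), omega N * snd (z N))).

Section Main.
Variable omega : nat -> R.
Hypothesis Hw : forall n, 1 <= omega n.
Variable N : nat.

Lemma T_linear : is_linear omega (Tm omega N).
Proof.
  split.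
  - intros x y Hx Hy. unfold Tm, T2add, Cadd, l1add. cbn [fst snd].
    rewrite (tl_ext (re (fun n => Cadd (x n) (y n))) (fun n => 1 * re x n + 1 * re y n)).
    2:{ intros n. unfold re, Cadd. simpl. ring. }
    rewrite (tl_ext (im (fun n => Cadd (x n) (y n))) (fun n => 1 * im x n + 1 * im y n)).
    2:{ intros n. unfold im, Cadd. simpl. ring. }
    rewrite !tl_lin by (first [apply (l1_re omega Hw); assumption | apply (l1_im omega Hw); assumption]).
    unfold Cadd; simpl. f_equal; f_equal; ring.
  - intros c x Hx. unfold Tm, T2scal, l1scal. cbn [fst snd].
    rewrite (tl_ext (re (fun n => Cmul c (x n))) (fun n => fst c * re x n + (- snd c) * im x n)).
    2:{ intros n. unfold re, im, Cmul. simpl. ring. }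
    rewrite (tl_ext (im (fun n => Cmul c (x n))) (fun n => fst c * im x n + snd c * re x n)).
    2:{ intros n. unfold re, im, Cmul. simpl. ring. }
    rewrite !tl_lin by (first [apply (l1_re omega Hw); assumption | apply (l1_im omega Hw); assumption]).
    unfold Cmul; simpl. f_equal; f_equal; ring.
Qed.

Lemma T_bound : opnorm_le omega (Tm omega N) 4.
Proof.
  intros x Hx. unfold T2norm, Tm. cbn [fst snd].
  pose proof (Cnorm_le (tl (re x) (S N), tl (im x) (S N))) as H1.
  pose proof (Cnorm_le (omega N * fst (x N), omega N * snd (x N))) as H2.
  cbn [fst snd] in H1, H2.
  pose proof (tl_re_bound omega Hw x (S N) Hx).
  pose proof (tl_im_bound omega Hw x (S N) Hx).
  pose proof (term_bound omega Hw x N Hx).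
  pose proof (Cnorm_fst (x N)). pose proof (Cnorm_snd (x N)).
  pose proof (Hw N).
  rewrite !Rabs_mult, (Rabs_right (omega N)) in H2 by lra.
  assert (omega N * Rabs (fst (x N)) <= Cnorm (x N) * omega N) by nra.
  assert (omega N * Rabs (snd (x N)) <= Cnorm (x N) * omega N) by nra.
  lra.
Qed.

Lemma T_defect delta : delta > 0 -> 4 / delta < omega N -> defect_le omega (Tm omega N) delta.
Proof.
  intros Hd HN x y Hx Hy Hnx Hny.
  assert (Hx1 := l1_re omega Hw x Hx). assert (Hx2 := l1_im omega Hw x Hx).
  assert (Hy1 := l1_re omega Hw y Hy). assert (Hy2 := l1_im omega Hw y Hy).
  unfold T2norm, T2sub, T2mul, Tm. cbn [fst snd].
  unfold Csub, Copp, Cadd, Cmul. cbn [fst snd].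
  change (re (l1mul x y)) with (fun k => fst (l1mul x y k)).
  change (im (l1mul x y)) with (fun k => snd (l1mul x y k)).
  rewrite chi_mul_fst, chi_mul_snd, l1mul_fst, l1mul_snd by auto.
  rewrite (tl_S (re y) N Hy1), (tl_S (im y) N Hy2).
  match goal with |- Cnorm ?a + Cnorm ?b <= _ =>
    pose proof (Cnorm_le a) as H1; pose proof (Cnorm_le b) as H2 end.
  cbn [fst snd] in H1, H2.
  unfold re, im in *.
  pose proof (term_bound omega Hw x N Hx). pose proof (term_bound omega Hw y N Hy).
  pose proof (Cnorm_fst (x N)). pose proof (Cnorm_snd (x N)).
  pose proof (Cnorm_fst (y N)). pose proof (Cnorm_snd (y N)).
  set (x1 := fst (x N)) in *. set (x2 := snd (x N)) in *.
  set (y1 := fst (y N)) in *. set (y2 := snd (y N)) in *.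
  match type of H1 with _ <= Rabs ?p + Rabs ?q =>
    replace (Rabs p) with (Rabs 0) in H1 by (f_equal; ring);
    replace (Rabs q) with (Rabs 0) in H1 by (f_equal; ring) end.
  match type of H2 with _ <= Rabs ?p + Rabs ?q =>
    replace (Rabs p) with (Rabs (omega N * (x1 * y1 - x2 * y2))) in H2 by (f_equal; ring);
    replace (Rabs q) with (Rabs (omega N * (x1 * y2 + x2 * y1))) in H2 by (f_equal; ring) end.
  rewrite Rabs_R0 in H1.
  pose proof (Hw N) as Hw1.
  assert (Ha : omega N * Rabs x1 <= 1) by nra.
  assert (Hb : omega N * Rabs x2 <= 1) by nra.
  assert (Hc : omega N * Rabs y1 <= 1) by nra.
  assert (He : omega N * Rabs y2 <= 1) by nra.
  assert (Q3 : Rabs (omega N * (x1 * y1 - x2 * y2)) + Rabs (omega N * (x1 * y2 + x2 * y1))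
     <= omega N * ((Rabs x1 + Rabs x2) * (Rabs y1 + Rabs y2))).
  { rewrite !Rabs_mult, (Rabs_right (omega N)) by lra.
    pose proof (Rabs_triang (x1 * y1) (- (x2 * y2))) as T7. rewrite Rabs_Ropp in T7.
    pose proof (Rabs_triang (x1 * y2) (x2 * y1)) as T8.
    rewrite !Rabs_mult in T7, T8.
    replace (x1 * y1 - x2 * y2) with (x1 * y1 + - (x2 * y2)) by ring.
    pose proof (Rabs_pos x1). pose proof (Rabs_pos x2). pose proof (Rabs_pos y1). pose proof (Rabs_pos y2).
    nra. }
  assert (Q4 : omega N * ((Rabs x1 + Rabs x2) * (Rabs y1 + Rabs y2)) * omega N <= 4).
  { pose proof (Rabs_pos x1). pose proof (Rabs_pos x2). pose proof (Rabs_pos y1). pose proof (Rabs_pos y2).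
    replace (omega N * ((Rabs x1 + Rabs x2) * (Rabs y1 + Rabs y2)) * omega N)
      with ((omega N * Rabs x1 + omega N * Rabs x2) * (omega N * Rabs y1 + omega N * Rabs y2)) by ring.
    replace 4 with (2 * 2) by ring.
    apply Rmult_le_compat; nra. }
  assert (Q5 : 4 < delta * omega N).
  { apply (Rmult_lt_compat_l delta) in HN; auto.
    replace (delta * (4 / delta)) with 4 in HN by (field; lra). lra. }
  assert (Q6 : omega N * ((Rabs x1 + Rabs x2) * (Rabs y1 + Rabs y2)) <= delta).
  { apply Rmult_le_reg_r with (omega N); [lra|]. lra. }
  lra.
Qed.
End Main.

Definition dl (N : nat) : seqC := fun n => if Nat.eqb n N then (1, 0) else (0, 0).

Lemma re_dl N n : re (dl N) n = if Nat.eqb n N then 1 else 0.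
Proof. unfold re, dl. dnat; reflexivity. Qed.
Lemma im_dl N n : im (dl N) n = 0.
Proof. unfold im, dl. dnat; reflexivity. Qed.

Lemma summ_re_dl N : summ (re (dl N)).
Proof. exists 1. apply is_ext with (v := fun n => if Nat.eqb n N then 1 else 0). apply re_dl. apply is_single. Qed.
Lemma summ_im_dl N : summ (im (dl N)).
Proof. exists 0. apply is_ext with (v := fun _ => 0). apply im_dl. apply is_zero. Qed.

Lemma tl_re_dl N k : tl (re (dl N)) k = if Nat.leb k N then 1 else 0.
Proof.
  apply Rsum_eq. destruct (Nat.leb_spec k N).
  - apply is_ext with (v := fun n => if Nat.eqb n N then 1 else 0); [|apply is_single].
    intros n. unfold mask. rewrite re_dl. dnat; lia || reflexivity.
  - apply is_ext with (v := fun _ => 0); [|apply is_zero].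
    intros n. unfold mask. rewrite re_dl. dnat; lia || reflexivity.
Qed.
Lemma tl_im_dl N k : tl (im (dl N)) k = 0.
Proof.
  apply Rsum_eq. apply is_ext with (v := fun _ => 0); [|apply is_zero].
  intros n. unfold mask. rewrite im_dl. dnat; reflexivity.
Qed.

Lemma dl_idem N : l1mul (dl N) (dl N) = dl N.
Proof.
  extensionality k.
  pose proof (summ_re_dl N). pose proof (summ_im_dl N).
  apply injective_projections.
  - rewrite l1mul_fst by auto. rewrite !tl_re_dl, !tl_im_dl.
    change (fst (dl N k)) with (re (dl N) k). change (snd (dl N k)) with (im (dl N) k).
    rewrite !re_dl, !im_dl. dnat; try lia; ring.
  - rewrite l1mul_snd by auto. rewrite !tl_re_dl, !tl_im_dl.
    change (fst (dl N k)) with (re (dl N) k). change (snd (dl N k)) with (im (dl N) k).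
    rewrite !re_dl, !im_dl. dnat; try lia; ring.
Qed.

Lemma Cnorm_10 : Cnorm (1, 0) = 1.
Proof. unfold Cnorm. cbn [fst snd]. replace (1 ^ 2 + 0 ^ 2) with 1 by ring. apply sqrt_1. Qed.
Lemma Cnorm_00 : Cnorm (0, 0) = 0.
Proof. unfold Cnorm. cbn [fst snd]. replace (0 ^ 2 + 0 ^ 2) with 0 by ring. apply sqrt_0. Qed.

Lemma dl_l1 omega N : infinite_sum (fun n => Cnorm (dl N n) * omega n) (omega N).
Proof.
  apply is_ext with (v := fun n => if Nat.eqb n N then omega N else 0); [|apply is_single].
  intros n. unfold dl. dnat; subst.
  - rewrite Cnorm_10; ring.
  - rewrite Cnorm_00; ring.
Qed.

Lemma idem_T2 (p q r s : R) :
  (p, q) = (p * p - q * q, p * q + q * p) ->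
  (r, s) = (p * r - q * s + (r * p - s * q), p * s + q * r + (r * q + s * p)) ->
  r = 0 /\ s = 0.
Proof.
  intros E1 E2. injection E1 as E1a E1b. injection E2 as E2a E2b.
  assert (Hq : q = 0).
  { destruct (Req_dec q 0); auto.
    assert (p = 1/2).
    { apply (Rmult_eq_reg_l q); auto. lra. }
    subst p. nra. }
  subst q. assert (Hp : p = 0 \/ p = 1) by (destruct (Req_dec p 0); [left; auto|right; apply (Rmult_eq_reg_l p); auto; lra]).
  destruct Hp; subst p; split; lra.
Qed.

Theorem theoremt (omega : nat -> R)
  (Hw : forall n, 1 <= omega n)
  (Hunb : forall M, exists n, M < omega n) :
  ~ AMNM_pair omega.
Proof.
  intro H. destruct (H 4 (1/4)) as [delta [Hd HT]]; try lra.
  destruct (Hunb (4/delta)) as [N HN].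
  specialize (HT (Tm omega N) (T_linear omega Hw N) (T_bound omega Hw N) (T_defect omega Hw N delta Hd HN)).
  destruct (HT (1/4)) as [phi [[Hlin [Hbd Hmul]] Hop]]; [lra|].
  assert (Hl1 : in_l1 omega (dl N)) by (exists (omega N); apply dl_l1).
  pose proof (Hmul _ _ Hl1 Hl1) as Hm. rewrite dl_idem in Hm.
  destruct (phi (dl N)) as [[p q] [r s]] eqn:E.
  assert (Hrs : r = 0 /\ s = 0).
  { apply (idem_T2 p q r s).
    - apply (f_equal fst) in Hm. exact Hm.
    - apply (f_equal snd) in Hm. exact Hm. }
  destruct Hrs as [-> ->]. specialize (Hop _ Hl1). cbv beta in Hop. rewrite E in Hop.
  unfold l1norm in Hop. rewrite (Rsum_eq _ _ (dl_l1 omega N)) in Hop.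
  unfold T2norm, T2sub, Tm, Csub, Copp, Cadd in Hop. cbn [fst snd] in Hop.
  match type of Hop with Cnorm ?a + Cnorm ?b <= _ =>
    pose proof (Cnorm_pos a); pose proof (Cnorm_fst b) end.
  cbn [fst snd] in *.
  unfold dl in *. rewrite Nat.eqb_refl in *. cbn [fst snd] in *.
  pose proof (Hw N).
  replace (omega N * 1 + - 0) with (omega N) in * by ring.
  replace (omega N * 1 + - 0) with (omega N) in * by ring.
  rewrite Rabs_right in H1 by lra. lra.
Qed.
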